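(* Let $\Lambda,\alpha$ be positive integers with $\alpha\in[\Lambda-1]$ and let $r\in[\Lambda-\alpha]$. For the MADC model with combinatorial topology (CT) having $\Lambda$ mapper nodes, $K=\binom{\Lambda}{\alpha}$ reducer nodes and computation load $r$, the communication load $$L(r,\alpha)=\frac{\binom{\Lambda-\alpha}{r}}{\binom{\Lambda}{r}\left(\binom{r+\alpha}{r}-1\right)}$$ is achievable. (The array $D_{\Lambda,r,\alpha}$, whose rows are the batches $B_T$ and columns the reducer nodes $U$, with $d_{T,U}=*$ exactly when reducer $U$ has access to $B_T$, is a $\binom{r+\alpha}{r}$-regular $\left(\binom{\Lambda}{\alpha},\binom{\Lambda}{r},\binom{\Lambda}{\alpha+r}\right)$ MRA representing this model.)
   Context: Notation: $[0,n)=\{0,1,\dots,n-1\}$, $[n]=\{1,\dots,n\}$. MADC (multi-access distributed computing) model: There are $\Lambda$ mapper nodes indexed by $[0,\Lambda)$ and $K$ reducer nodes. There are $N$ input files $w_0,\dots,w_{N-1}\in\mathbb{F}_{2^d}$ and $Q$ output functions $\phi_q:\mathbb{F}_{2^d}^N\to\mathbb{F}_{2^b}$, $q\in[0,Q)$, of the form $\phi_q(w_0,\dots,w_{N-1})=h_q(v_{q,0},\dots,v_{q,N-1})$, where $v_{q,n}=g_{q,n}(w_n)\in\mathbb{F}_{2^t}$ is called an intermediate value (IV). Each reducer node $k$ is assigned a set $\mathcal W_k\subseteq[0,Q)$ of $Q/K$ output functions, these sets being pairwise disjoint. The files are partitioned into $F$ disjoint batches of $N/F$ files each. Map phase: each mapper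 node $\lambda$ stores a set $M_\lambda$ of batches and computes all IVs $v_{q,n}$, $q\in[0,Q)$, for all files $w_n$ in its stored batches. Each reducer node is connected to a set of mapper nodes and has access to every batch stored at any mapper node it is connected to, together with all IVs computed from those batches. Shuffle phase: each reducer node $k$ broadcasts to all other reducer nodes, error-free, a message $\mathbf X_k$ of $l_k$ bits that is a function of the IVs it has access to. Reduce phase: each reducer node $k$ must recover all IVs $v_{q,n}$ with $q\in\mathcal W_k$, $n\in[0,N)$, from the received messages and the IVs it has access to. The computation load is $r=\sum_{\lambda}|M_\lambda|/F$ and the communication load is $L=\sum_{k}l_k/(QNt)$. A communication load $L$ is achievable for a given model if there exists a shuffle/reduce scheme satisfying all decoding requirements that attains $L$ (for a suitable choice of the number of files per batch, the number of functions per reducer, and the IV length $t$). Combinatorial topology (CT): the files are split into $F=\binom{\Lambda}{r}$ batches $B_T$, one for each $T\subset[0,\Lambda)$ with $|T|=r$; mapper node $\lambda$ stores exactly the batches $B_T$ with $\lambda\in T$; there are $K=\binom{\Lambda}{\alpha}$ reducer nodes, one for each $\alpha$-subset $U\subset[0,\Lambda)$, and reducer node $U$ is connected exactly to the mapper nodes in $U$ (so it has access to $B_T$ iff $T\cap U\neq\emptyset$). $D_{\Lambda,r,\alpha}$: order the $(\alpha+r)$-subsets of $[0,\Lambda)$ lexicographically and let $y_{\alpha+r}(T')$ be the position of $T'$ minus 1; $D_{\Lambda,r,\alpha}$ has rows indexed by $r$-subsets $T$ and columns by $\alpha$-subsets $U$ of $[0,\Lambda)$, with $d_{T,U}=*$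 if $T\cap U\ne\emptyset$ and $d_{T,U}=y_{\alpha+r}(T\cup U)$ otherwise. A $g$-regular $(K,F,S)$ MRA is an $F\times K$ array with entries $*$ or integers in $[0,S)$, each integer occurring exactly $g\ge2$ times, such that two equal integer entries lie in distinct rows $f_1,f_2$ and distinct columns $k_1,k_2$ with $p_{f_1,k_2}=p_{f_2,k_1}=*$. *)

(* Defs.v *)
From mathcomp Require Import all_boot all_order all_algebra.
Set Implicit Arguments. Unset Strict Implicit. Unset Printing Implicit Defensive.
Import GRing.Theory Num.Theory.

(* Mapper nodes: 'I_Lam.
   Files: pairs (T, i) with i : 'I_eta  -- file i of batch B_T (eta files per batch),
          so N = C(Lam,r) * eta.
   Output functions: pairs (U, j) with j : 'I_zeta -- W_U = {(U,j) | j},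
          so Q = C(Lam,alpha) * zeta, the W_U pairwise disjoint of size Q/K = zeta.
   IVs v_{q,n} in F_{2^t}: represented as t-bit strings. *)

Definition ksubsets (Lam k : nat) := {A : {set 'I_Lam} | #|A| == k}.
Definition ctBatch (Lam r : nat) := ksubsets Lam r.
Definition ctReducer (Lam a : nat) := ksubsets Lam a.

Definition ctFile (Lam r eta : nat) := (ctBatch Lam r * 'I_eta)%type.
Definition ctFun (Lam a zeta : nat) := (ctReducer Lam a * 'I_zeta)%type.

Definition IVassign (Lam r a eta zeta t : nat) :=
  ctFun Lam a zeta -> ctFile Lam r eta -> t.-tuple bool.

(* Reducer U has access to batch B_T iff T meets U (connected to mappers in U). *)
Definition ct_access (Lam r a : nat) (U : ctReducer Lam a) (T : ctBatch Lam r) : bool :=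
  ~~ [disjoint val U & val T].

Definition agree_on (Lam r a eta zeta t : nat) (U : ctReducer Lam a)
  (v v' : IVassign Lam r a eta zeta t) : Prop :=
  forall (q : ctFun Lam a zeta) (n : ctFile Lam r eta),
    ct_access U n.1 -> v q n = v' q n.

Definition ct_achievable (Lam r a : nat) (load : rat) : Prop :=
  exists (eta zeta t : nat), [/\ 0 < eta, 0 < zeta, 0 < t &
    exists (l : ctReducer Lam a -> nat)
      (enc : forall U : ctReducer Lam a,
               IVassign Lam r a eta zeta t -> (l U).-tuple bool)
      (dec : forall U : ctReducer Lam a,
               (forall U' : ctReducer Lam a, (l U').-tuple bool) ->
               IVassign Lam r a eta zeta t ->
               'I_zeta -> ctFile Lam r eta -> t.-tuple bool),
      [/\ (forall U v v', agree_on U v v' -> enc U v = enc U v'),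
          (forall U X v v', agree_on U v v' -> dec U X v = dec U X v'),
          (forall U v (j : 'I_zeta) (n : ctFile Lam r eta),
              dec U (fun U' => enc U' v) v j n = v (U, j) n) &
          ((\sum_(U : ctReducer Lam a) l U)%:R
             / ((#|{: ctReducer Lam a}| * zeta) * (#|{: ctBatch Lam r}| * eta) * t)%:R
           = load)%R]].

(* Main.v *)
Require Import Defs.
From mathcomp Require Import all_boot all_order all_algebra.
From Stdlib Require Import FunctionalExtensionality.
From mathcomp Require Import zify ring.
Set Implicit Arguments. Unset Strict Implicit. Unset Printing Implicit Defensive.

Section CT.
Variables Lam a r : nat.
Local Notation I := 'I_Lam.
Local Notation Red := (ksubsets Lam a).
Local Notation Bat := (ksubsets Lam r).

Lemma card_val_sub (k : nat) (P : pred {set I}) :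
  #|[set x : ksubsets Lam k | P (val x)]| = #|[set A : {set I} | P A & #|A| == k]|.
Proof.
rewrite -(card_imset _ val_inj); apply: eq_card => A; rewrite inE.
apply/imsetP/andP => [[x]|[PA kA]].
  by rewrite inE => Px ->; split => //; exact: (valP x).
by exists (Sub A kA) => //; rewrite inE SubK.
Qed.

Definition DT (U : Red) := [set T : Bat | [disjoint val U & val T]].

Lemma card_DT U : #|DT U| = 'C(Lam - a, r).
Proof.
rewrite /DT (@card_val_sub r (fun A => [disjoint val U & A])).
rewrite (eq_card (B := [set A : {set I} | A \subset ~: val U & #|A| == r])); last first.
  by move=> A; rewrite !inE disjoint_sym disjoints_subset.
rewrite cards_draws; congr 'C(_, _).
have := cardsC (val U); rewrite (eqP (valP U)) => h.
by rewrite -[X in X - a]card_ord -h addKn.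
Qed.

Lemma card_ks k : #|{: ksubsets Lam k}| = 'C(Lam, k).
Proof.
rewrite -cardsT (eq_card (B := [set x : ksubsets Lam k | predT (val x)])); last first.
  by move=> x; rewrite !inE.
rewrite card_val_sub -[Lam in RHS]card_ord -card_draws.
by apply: eq_card => A; rewrite !inE.
Qed.

Definition RS (S : {set I}) := enum [set U : Red | val U \subset S].

Lemma size_RS (S : {set I}) : #|S| = a + r -> size (RS S) = 'C(r + a, r).
Proof.
move=> cS; rewrite /RS -cardE (@card_val_sub a (fun A => A \subset S)).
by rewrite cards_draws cS -(bin_sub (leq_addr r a)) addKn addnC.
Qed.


Definition grp (S : {set I}) (p : Red * Bat) :=
  [disjoint val p.1 & val p.2] && (val p.1 :|: val p.2 == S).

Lemma grp_meet S (p : Red * Bat) (X : Red) :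
  grp S p -> val X \subset S -> X != p.1 -> ~~ [disjoint val X & val p.2].
Proof.
move=> /andP[dis /eqP eS] sub neq; apply/negP => dXT; apply/negP: neq; apply/negPn.
apply/eqP/val_inj/eqP.
rewrite eqEcard (eqP (valP X)) (eqP (valP p.1)) leqnn andbT.
apply/subsetP => x xX.
have: x \in S by apply: (subsetP sub).
by rewrite -eS inE (disjointFr dXT xX) orbF.
Qed.

Lemma grp_snd S (p : Red * Bat) : grp S p -> val p.2 = S :\: val p.1.
Proof.
move=> /andP[dis /eqP <-]; apply/setP => x; rewrite !inE.
case xT: (x \in val p.2) => /=; last by case: (x \in val p.1).
by rewrite (disjointFl dis xT) orbT.
Qed.

Lemma grp_exists (S : {set I}) (U : Red) : #|S| = a + r -> val U \subset S ->
  exists T : Bat, grp S (U, T).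
Proof.
move=> cS sub.
have cT : #|S :\: val U| == r.
  by rewrite cardsD (setIidPr sub) cS (eqP (valP U)) addKn.
exists (@Sub _ _ Bat _ cT); rewrite /grp /=; apply/andP; split.
  rewrite -setI_eq0; apply/eqP/setP => x; rewrite !inE.
  by case: (x \in val U); rewrite ?andbF.
apply/eqP/setP => x; rewrite !inE.
case xU: (x \in val U) => //=.
by rewrite (subsetP sub _ xU).
Qed.


Definition tt0 := 'C(r + a, r) - 1.
Local Notation IVA := (IVassign Lam r a 1 1 tt0).

Definition pos (S : {set I}) (U : Red) := index U (RS S).
Definition idx S U U' := unbump (pos S U) (pos S U').
Definition vv (w : IVA) (U : Red) (T : Bat) : tt0.-tuple bool :=
  w (U, ord0) (T, ord0).
Definition bitt (x : tt0.-tuple bool) k := nth false x k.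

Definition encf (U' : Red) (w : IVA) (T : Bat) : bool :=
  \big[addb/false]_(p | grp (val U' :|: val T) p && (p.1 != U'))
     bitt (vv w p.1 p.2) (idx (val U' :|: val T) p.1 U').

Definition enc0 (U' : Red) (w : IVA) : (#|DT U'|).-tuple bool :=
  map_tuple (encf U' w) (enum_tuple (mem (DT U'))).

Definition mask (U : Red) (w : IVA) : IVA := fun q n =>
  if ct_access U n.1 then w q n else nseq_tuple tt0 false.

Definition dbit (U : Red) (X : forall U' : Red, (#|DT U'|).-tuple bool)
  (w : IVA) (T : Bat) (k : nat) : bool :=
  let S := val U :|: val T in
  let U' := nth U (RS S) (bump (pos S U) k) in
  addb (match [pick T' | grp S (U', T')] with
        | Some T' => nth false (X U') (index T' (enum (DT U')))
        | None => false end)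
   (\big[addb/false]_(p | grp S p && (p.1 != U') && (p.1 != U))
       bitt (vv w p.1 p.2) (idx S p.1 U')).

Definition dec0 (U : Red) (X : forall U' : Red, (#|DT U'|).-tuple bool)
  (w : IVA) (j : 'I_1) (n : ctFile Lam r 1) : tt0.-tuple bool :=
  if ct_access U n.1 then w (U, j) n else [tuple dbit U X w n.1 k | k < tt0].


Lemma mask_acc (U : Red) (w : IVA) q (n : ctFile Lam r 1) : ct_access U n.1 -> mask U w q n = w q n.
Proof. by rewrite /mask => ->. Qed.

Lemma vv_mask (U : Red) (w : IVA) (p : Red * Bat) (S : {set I}) :
  grp S p -> val U \subset S -> U != p.1 -> vv (mask U w) p.1 p.2 = vv w p.1 p.2.
Proof. by move=> g s n; rewrite /vv mask_acc //; exact: grp_meet g s n. Qed.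

Lemma dbit_ok (U : Red) (v : IVA) (T : Bat) k : [disjoint val U & val T] -> k < tt0 ->
  dbit U (fun U' => enc0 U' (mask U' v)) (mask U v) T k = bitt (vv v U T) k.
Proof.
move=> dUT kt; rewrite /dbit.
set S := val U :|: val T.
have cS : #|S| = a + r.
  by rewrite cardsU (disjoint_setI0 dUT) cards0 subn0 (eqP (valP U)) (eqP (valP T)).
have sz := size_RS cS.
have uRS : uniq (RS S) by exact: enum_uniq.
have UinRS : U \in RS S by rewrite /RS mem_enum inE subsetUl.
set pU := pos S U.
have pUlt : pU < size (RS S) by rewrite /pU /pos index_mem.
have jlt : bump pU k < size (RS S).
  rewrite sz; move: kt; rewrite /tt0 /bump; case: (pU <= k) => /=; 
  move: (bin_gt0 (r + a) r); rewrite leq_addr /=; lia.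
set U' := nth U (RS S) (bump pU k).
have U'in : U' \in RS S by exact: mem_nth.
have subU' : val U' \subset S by move: U'in; rewrite /RS mem_enum inE.
have posU' : pos S U' = bump pU k by rewrite /pos index_uniq.
have neqU : U != U'.
  apply/eqP => eUU'; have := neq_bump pU k; rewrite -posU' -eUU' eqxx //.
have idxk : idx S U U' = k by rewrite /idx posU' bumpK.
have subU : val U \subset S by rewrite subsetUl.
have gUT : grp S (U, T) by rewrite /grp /= dUT eqxx.
case: pickP => [T' gT'|none]; last first.
  by have [T0 g0] := grp_exists cS subU'; move: (none T0); rewrite g0.
have T'in : T' \in DT U' by move: gT'; rewrite /DT inE => /andP[].
rewrite /enc0 /= (nth_map T'); last by rewrite index_mem mem_enum.
rewrite nth_index ?mem_enum // /encf.
have -> : val U' :|: val T' = S by move: gT' => /andP[_ /eqP].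
rewrite (bigD1 (U, T)); last by rewrite gUT neqU.
rewrite (vv_mask _ gUT) //; last by rewrite eq_sym.
rewrite /= idxk.
rewrite -addbA; apply/eqP; rewrite -[X in _ == X]addbF; apply/eqP; congr addb.
rewrite (eq_bigl (fun p => grp S p && (p.1 != U') && (p.1 != U))); last first.
  move=> [X Y]; case gXY: (grp S (X, Y)); rewrite ?andFb // !andTb.
  case: (X != U'); rewrite ?andFb // !andTb.
  case: (eqVneq X U) => [eXU|nXU].
    subst X; rewrite [~~ true]/=; apply/negbTE/negPn/eqP; congr pair; apply: val_inj.
    by move: (grp_snd gXY) (grp_snd gUT) => /= -> ->.
  have -> : ((X, Y) != (U, T)) = true.
    by apply/eqP => -[eXU _]; rewrite eXU eqxx in nXU.
  by [].
rewrite -big_split /=; apply: big1 => [[X Y]] /= /andP[/andP[gXY nX'] nXU].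
rewrite (vv_mask _ gXY) // ?(eq_sym U') //.
rewrite (vv_mask _ gXY) // ?(eq_sym U) //.
by rewrite addbb.
Qed.

End CT.

Lemma mask_agree Lam r a (U : ctReducer Lam a) (v v' : IVassign Lam r a 1 1 (tt0 a r)) :
  agree_on U v v' -> mask U v = mask U v'.
Proof.
move=> H; apply: functional_extensionality => q; apply: functional_extensionality => n.
by rewrite /mask; case: ifP => // h; exact: H q n h.
Qed.

Import GRing.Theory Num.Theory.

Theorem theorem4 (Lam a r : nat)
  (ha1 : 1 <= a) (ha2 : a <= Lam - 1) (hr1 : 1 <= r) (hr2 : r <= Lam - a) :
  ct_achievable Lam r a
    (('C(Lam - a, r))%:R / (('C(Lam, r))%:R * (('C(r + a, r))%:R - 1)) : rat)%R.
Proof.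
have g2 : 1 < 'C(r + a, r).
  case: r hr1 hr2 => // r' _ _; rewrite addSn binS.
  have h1 : 0 < 'C(r' + a, r'.+1) by rewrite bin_gt0; lia.
  have h2 : 0 < 'C(r' + a, r') by rewrite bin_gt0; lia.
  lia.
exists 1, 1, (tt0 a r); split => //; first by rewrite /tt0 subn_gt0.
exists (fun U => #|DT r U|), (fun U v => enc0 U (mask U v)),
       (fun U X v => dec0 U X (mask U v)); split.
- by move=> U v v' H; rewrite (mask_agree H).
- by move=> U X v v' H; rewrite (mask_agree H).
- move=> U v j [T i]; rewrite /dec0; case: ifP => acc.
    by rewrite mask_acc.
  rewrite (ord1 i) (ord1 j); apply: eq_from_tnth => k.
  rewrite tnth_mktuple dbit_ok //; last by move/negbFE: acc.
  by rewrite /bitt /vv (tnth_nth false).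
- rewrite (eq_bigr (fun _ => 'C(Lam - a, r))); last by move=> U _; rewrite card_DT.
  rewrite sum_nat_const card_ks card_ks /tt0.
  have hK : 0 < 'C(Lam, a) by rewrite bin_gt0; lia.
  have hF : 0 < 'C(Lam, r) by rewrite bin_gt0; lia.
  rewrite !muln1 !natrM natrB; last exact: ltnW.
  have nK : ('C(Lam, a)%:R : rat) != 0%R by rewrite pnatr_eq0 -lt0n.
  have nF : ('C(Lam, r)%:R : rat) != 0%R by rewrite pnatr_eq0 -lt0n.
  have nG : (('C(r + a, r))%:R - 1%:R : rat) != 0%R.
    by rewrite -natrB ?pnatr_eq0 -?lt0n ?subn_gt0 //; exact: ltnW.
  by rewrite -[X in (_ / X)%R]mulrA invfM mulrACA mulfV // mul1r.
Qed.
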